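(* Let $a\in\mathbb{C}$ with $2a\notin\{0,-1,-2,\ldots\}$. Then \[ {}_5F_4\!\left(\left.{1,\,1,\,1-2a,\,\frac{7+3a\pm\sqrt{9a^2+2a-1}}{5}\atop \frac32,\,1+2a,\,\frac{2+3a\pm\sqrt{9a^2+2a-1}}{5}}\right|-\frac14\right)=\frac{4a}{1+2a}. \]
   Context: ${}_pF_q\left(\left.{a_1,\ldots,a_p\atop b_1,\ldots,b_q}\right|z\right)=\sum_{n\ge0}\frac{(a_1)_n\cdots(a_p)_n}{(b_1)_n\cdots(b_q)_n}\frac{z^n}{n!}$ with $(x)_n=x(x+1)\cdots(x+n-1)$. A parameter written with $\pm$ stands for the two parameters obtained with $+$ and with $-$. *)

(* Defs.v *)
From Stdlib Require Import Reals List Arith.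
From Coquelicot Require Import Coquelicot.
Open Scope C_scope.

Fixpoint poch (x : C) (n : nat) : C :=
  match n with
  | O => 1
  | S k => poch x k * (x + RtoC (INR k))
  end.

Definition prodC (l : list C) : C := fold_right Cmult 1 l.

Definition hyp_term (as_ bs : list C) (z : C) (n : nat) : C :=
  prodC (map (fun a => poch a n) as_) / prodC (map (fun b => poch b n) bs)
  * Cpow z n / RtoC (INR (Factorial.fact n)).

Definition hyp_sum (as_ bs : list C) (z l : C) : Prop :=
  @is_series _ C_NormedModule (hyp_term as_ bs z) l.

(* Main.v *)
Require Import Defs.
From Stdlib Require Import Reals List Lra Psatz Lia.
From Coquelicot Require Import Coquelicot.
Import ListNotations.
Open Scope C_scope.

Lemma poch_shift x n : poch (x+1) n * x = poch x n * (x + RtoC (INR n)).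
Proof.
  induction n as [|n IH]; simpl poch.
  - simpl INR. ring.
  - rewrite S_INR, RtoC_plus.
    transitivity (poch (x+1) n * x * (x + 1 + INR n)). ring.
    rewrite IH. ring.
Qed.

Lemma poch_one n : poch 1 n = RtoC (INR (Factorial.fact n)).
Proof.
  induction n as [|n IH]; simpl poch.
  - reflexivity.
  - rewrite IH. change (Factorial.fact (S n)) with (S n * Factorial.fact n)%nat.
    rewrite mult_INR, S_INR, !RtoC_mult, RtoC_plus. ring.
Qed.

Lemma poch_nz x n : (forall m : nat, x <> - RtoC (INR m)) -> poch x n <> 0.
Proof.
  intros H. induction n as [|n IH]; simpl poch.
  - intro E. injection E. lra.
  - apply Cmult_neq_0; auto. intro E. apply (H n).
    rewrite <- (Cplus_0_l (- _)), <- E. ring.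
Qed.

Lemma nz32 m : (3/2 : C) <> - RtoC (INR m).
Proof. intros E. apply (f_equal Re) in E. simpl in E. pose proof (pos_INR m).
  field_simplify in E. lra. Qed.

Definition T (a : C) (n : nat) : C :=
  poch 1 n * poch (1 - 2*a) n / (poch (3/2) n * poch (1 + 2*a) n) * Cpow (-(1/4)) n.

Definition G (a : C) (n : nat) : C :=
  RtoC (2*(2*INR n + 1)) * (RtoC (INR n) + 2*a) * T a n.

Definition P (a : C) (n : nat) : C :=
  5 * RtoC (INR n) * RtoC (INR n) + (4 + 6*a) * RtoC (INR n) + 1 + 2*a.

Section Core.
Variable a : C.
Hypothesis hb : forall m : nat, 1 + 2*a <> - RtoC (INR m).

Lemma nzS x n : (forall m : nat, x <> - RtoC (INR m)) -> x + RtoC (INR n) <> 0.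
Proof. intros H E. apply (H n). rewrite <- (Cplus_0_l (- _)), <- E. ring. Qed.

Lemma T_S n : T a (S n) = T a n * ((1 + RtoC (INR n)) * (1 - 2*a + RtoC (INR n))
   / ((3/2 + RtoC (INR n)) * (1 + 2*a + RtoC (INR n)))) * (-(1/4)).
Proof.
  unfold T. simpl poch. simpl Cpow.
  pose proof (poch_nz _ n nz32). pose proof (poch_nz _ n hb).
  pose proof (nzS _ n nz32). pose proof (nzS _ n hb).
  field. repeat split; auto.
  intros E; apply (f_equal Re) in E; simpl in E; pose proof (pos_INR n); lra.
Qed.

Lemma G_diff n : G a n - G a (S n) = T a n * P a n.
Proof.
  unfold G, P. rewrite T_S, S_INR.
  pose proof (nzS _ n nz32). pose proof (nzS _ n hb).
  repeat rewrite ?RtoC_mult, ?RtoC_plus.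
  field. split; auto. all: try (intros E; apply (f_equal Re) in E; simpl in E; pose proof (pos_INR n); lra).
Qed.

Lemma G_rel n : G a (S n) * (RtoC (2*(2*INR n + 1)) * (RtoC (INR n) + 2*a))
   = - G a n * ((RtoC (INR n) + 1) * (RtoC (INR n) + 1 - 2*a)).
Proof.
  unfold G. rewrite T_S, S_INR.
  pose proof (nzS _ n nz32). pose proof (nzS _ n hb).
  repeat rewrite ?RtoC_mult, ?RtoC_plus.
  field. split; auto. all: try (intros E; apply (f_equal Re) in E; simpl in E; pose proof (pos_INR n); lra).
Qed.

Lemma G0 : G a 0 = 4 * a.
Proof. unfold G, T. simpl.
  replace (2*(2*0+1))%R with 2%R by ring. field.
Qed.
End Core.

Section Core2.
Variables a u v : C.
Hypothesis hb : forall m : nat, 1 + 2*a <> - RtoC (INR m).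
Hypothesis hu : forall m : nat, u <> - RtoC (INR m).
Hypothesis hv : forall m : nat, v <> - RtoC (INR m).
Hypothesis huv : u * v = (1 + 2*a) / 5.
Hypothesis hupv : u + v = (4 + 6*a) / 5.

Lemma nz0 x : (forall m : nat, x <> - RtoC (INR m)) -> x <> 0.
Proof. intros H E. apply (H 0%nat). rewrite E. simpl INR. ring. Qed.

Lemma nz1 : forall m : nat, (1:C) <> - RtoC (INR m).
Proof. intros m E. apply (f_equal Re) in E. simpl in E. pose proof (pos_INR m). lra. Qed.

Lemma shift_eq x n : (forall m : nat, x <> - RtoC (INR m)) ->
  poch (x+1) n = poch x n * (x + RtoC (INR n)) / x.
Proof. intros H. pose proof (nz0 _ H). rewrite <- poch_shift. field. auto. Qed.

Lemma ratio n : poch (u+1) n * poch (v+1) n = poch u n * poch v n * (P a n / (1 + 2*a)).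
Proof.
  rewrite (shift_eq u n hu), (shift_eq v n hv).
  pose proof (nz0 _ hu). pose proof (nz0 _ hv). pose proof (nz0 _ hb).
  replace (poch u n * (u + INR n) / u * (poch v n * (v + INR n) / v)) with
    (poch u n * poch v n * ((u + INR n)*(v + INR n)/(u*v))) by (field; split; auto).
  f_equal.
  replace ((u + INR n)*(v + INR n)) with (u*v + (u+v)*INR n + INR n * INR n) by ring.
  rewrite huv, hupv. unfold P. field. auto.
Qed.

Definition tm := hyp_term [(1:C); (1:C); 1 - 2 * a; u + 1; v + 1]
    [(3 / 2 : C); 1 + 2 * a; u; v] (- (1 / 4)).

Lemma term_eq n : tm n * (1 + 2*a) = T a n * P a n.
Proof.
  unfold tm, hyp_term. simpl.
  replace (poch (u + 1) n * (poch (v + 1) n * 1)) with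
    (poch u n * poch v n * (P a n / (1 + 2*a))) by (rewrite <- ratio; ring).
  rewrite <- poch_one.
  pose proof (poch_nz _ n hu). pose proof (poch_nz _ n hv).
  pose proof (poch_nz _ n hb). pose proof (poch_nz _ n nz32).
  pose proof (poch_nz _ n nz1). pose proof (nz0 _ hb).
  unfold T. field. repeat split; auto.
Qed.

Lemma psum N : sum_n tm N = (4*a - G a (S N)) / (1 + 2*a).
Proof.
  pose proof (nz0 _ hb).
  induction N as [|N IH].
  - rewrite sum_O. change (@eq C (tm 0) ((4*a - G a 1)/(1+2*a))). rewrite <- (G0 a). rewrite (G_diff a hb). rewrite <- term_eq. field. auto.
  - rewrite sum_Sn, IH. change (@eq C ((4*a - G a (S N))/(1+2*a) + tm (S N)) ((4*a - G a (S (S N)))/(1+2*a))).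
    replace (tm (S N)) with (tm (S N) * (1 + 2*a) / (1 + 2*a)) by (field; auto).
    rewrite term_eq, <- G_diff by auto. field. auto.
Qed.
End Core2.

Section Dec.
Variable a : C.
Hypothesis hb : forall m : nat, 1 + 2*a <> - RtoC (INR m).

Lemma G_step n : (INR n >= 2 + 5 * Cmod (2*a))%R ->
  (Cmod (G a (S n)) <= 3/4 * Cmod (G a n))%R.
Proof.
  intros Hn.
  pose proof (f_equal Cmod (G_rel a hb n)) as E.
  rewrite !Cmod_mult, Cmod_opp in E.
  set (A := Cmod (2*a)) in *.
  assert (HA : (0 <= A)%R) by apply Cmod_ge_0.
  pose proof (pos_INR n) as Hn0.
  assert (E1 : Cmod (RtoC (2 * (2 * INR n + 1))) = (2 * (2 * INR n + 1))%R).
  { rewrite Cmod_R, Rabs_pos_eq; lra. }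
  assert (E2 : Cmod (RtoC (INR n) + 1) = (INR n + 1)%R).
  { rewrite <- RtoC_plus, Cmod_R, Rabs_pos_eq; lra. }
  assert (Y : (INR n - A <= Cmod (RtoC (INR n) + 2*a))%R).
  { pose proof (Cmod_triangle (RtoC (INR n) + 2*a) (-(2*a))) as H.
    replace (RtoC (INR n) + 2*a + -(2*a)) with (RtoC (INR n)) in H by ring.
    rewrite Cmod_opp, Cmod_R, Rabs_pos_eq in H; fold A in H; lra. }
  assert (X : (Cmod (RtoC (INR n) + 1 - 2*a) <= INR n + 1 + A)%R).
  { pose proof (Cmod_triangle (RtoC (INR n) + 1) (-(2*a))) as H.
    rewrite Cmod_opp, E2 in H. fold A in H. exact H. }
  rewrite E1, E2 in E.
  set (g1 := Cmod (G a (S n))) in *. set (g0 := Cmod (G a n)) in *.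
  set (Y1 := Cmod (RtoC (INR n) + 2*a)) in *.
  set (X1 := Cmod (RtoC (INR n) + 1 - 2*a)) in *.
  assert (0 <= g0)%R by apply Cmod_ge_0.
  assert (0 <= X1)%R by apply Cmod_ge_0.
  assert (K1 : ((INR n + 1) * X1 <= 3/4 * (2 * (2 * INR n + 1)) * Y1)%R).
  { apply Rle_trans with ((INR n + 1) * (INR n + 1 + A))%R.
    - apply Rmult_le_compat_l; lra.
    - apply Rle_trans with (3/4 * (2 * (2 * INR n + 1)) * (INR n - A))%R.
      + nra.
      + apply Rmult_le_compat_l; lra. }
  assert (Ypos : (0 < 2 * (2 * INR n + 1) * Y1)%R) by nra.
  apply Rmult_le_reg_r with (2 * (2 * INR n + 1) * Y1)%R; auto.
  rewrite E. nra.
Qed.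

Lemma G_lim : is_lim_seq (fun n => Cmod (G a n)) 0%R.
Proof.
  destruct (INR_unbounded (2 + 5 * Cmod (2*a))) as [N0 HN0].
  apply (is_lim_seq_incr_n _ N0).
  assert (B : forall k, (Cmod (G a (k + N0)) <= (3/4)^k * Cmod (G a N0))%R).
  { induction k as [|k IH].
    - simpl. lra.
    - change (S k + N0)%nat with (S (k + N0)).
      apply Rle_trans with (3/4 * Cmod (G a (k + N0)))%R.
      + apply G_step. rewrite plus_INR. pose proof (pos_INR k). lra.
      + simpl. nra. }
  apply is_lim_seq_le_le with (fun _ => 0%R) (fun k => ((3/4)^k * Cmod (G a N0))%R).
  - intros k. split; [apply Cmod_ge_0 | apply B].
  - apply is_lim_seq_const.
  - replace (Finite 0) with (Rbar_mult 0 (Cmod (G a N0))) by (simpl; f_equal; ring).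
    apply is_lim_seq_scal_r. apply is_lim_seq_geom. rewrite Rabs_pos_eq; lra.
Qed.
End Dec.

Lemma core (a u v : C)
  (hb : forall m : nat, 1 + 2*a <> - RtoC (INR m))
  (hu : forall m : nat, u <> - RtoC (INR m))
  (hv : forall m : nat, v <> - RtoC (INR m))
  (huv : u * v = (1 + 2*a) / 5)
  (hupv : u + v = (4 + 6*a) / 5) :
  hyp_sum [(1:C); (1:C); 1 - 2 * a; u + 1; v + 1]
    [(3 / 2 : C); 1 + 2 * a; u; v] (- (1 / 4)) (4 * a / (1 + 2 * a)).
Proof.
  unfold hyp_sum, is_series.
  apply filterlim_locally. intros eps.
  pose proof (nz0 _ hb) as H0.
  assert (Hc : (0 < Cmod (1 + 2*a))%R) by (apply Cmod_gt_0; auto).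
  pose proof (G_lim a hb) as L. apply is_lim_seq_spec in L.
  destruct (L (mkposreal _ (Rmult_lt_0_compat _ _ (cond_pos eps) Hc))) as [N HN].
  exists N. intros n Hn. apply norm_compat1.
  change (Cmod (sum_n (tm a u v) n - 4 * a / (1 + 2 * a)) < eps)%R.
  rewrite (psum a u v hb hu hv huv hupv).
  replace ((4 * a - G a (S n)) / (1 + 2 * a) - 4 * a / (1 + 2 * a))
    with (- G a (S n) / (1 + 2*a)) by (field; auto).
  rewrite Cmod_div, Cmod_opp by auto.
  specialize (HN (S n) ltac:(lia)). simpl in HN.
  rewrite Rminus_0_r, Rabs_pos_eq in HN by apply Cmod_ge_0.
  apply Rmult_lt_reg_r with (Cmod (1 + 2*a)); auto.
  unfold Rdiv. rewrite Rmult_assoc, Rinv_l by lra. lra.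
Qed.

Theorem corollary10 (a s : C)
  (ha : forall m : nat, 2 * a <> - RtoC (INR m))
  (hs : s * s = 9 * a * a + 2 * a - 1)
  (hb : forall m : nat,
      (2 + 3 * a + s) / 5 <> - RtoC (INR m) /\
      (2 + 3 * a - s) / 5 <> - RtoC (INR m)) :
  hyp_sum
    [(1:C); (1:C); 1 - 2 * a; (7 + 3 * a + s) / 5; (7 + 3 * a - s) / 5]
    [(3 / 2 : C); 1 + 2 * a; (2 + 3 * a + s) / 5; (2 + 3 * a - s) / 5]
    (- (1 / 4))
    (4 * a / (1 + 2 * a)).
Proof.
  assert (F5 : (5:C) <> 0).
  { intro E. apply (f_equal Re) in E. simpl in E. lra. }
  replace ((7 + 3 * a + s) / 5) with ((2 + 3 * a + s) / 5 + 1) by (field; auto).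
  replace ((7 + 3 * a - s) / 5) with ((2 + 3 * a - s) / 5 + 1) by (field; auto).
  apply core.
  - intros m E. apply (ha (S m)). rewrite S_INR, RtoC_plus.
    replace (2*a) with ((1+2*a) - 1) by ring. rewrite E. ring.
  - intros m. apply (proj1 (hb m)).
  - intros m. apply (proj2 (hb m)).
  - replace ((2 + 3 * a + s) / 5 * ((2 + 3 * a - s) / 5))
      with (((2 + 3*a)*(2 + 3*a) - s*s)/25) by (field; auto).
    rewrite hs. field. all: auto.
  - field. all: auto.
Qed.
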